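(* For all $0<q<1$, all integers $n\ge 1$ and $1\le i\le n$, and all $t\ge 1$, if $\pi\sim\mu_{n,q}$ then $$\mathbb{P}(|\pi(i)-i|\ge t)\le 2q^t,$$ and $$c\min\left(\frac{q}{1-q},\,n-1\right)\le \mathbb{E}|\pi(i)-i|\le \min\left(\frac{2q}{1-q},\,n-1\right)$$ for some absolute constant $c>0$. In addition, if $n\ge 3$ and $1\le t\le \frac{n+5}{8}$ then $$\mathbb{P}(|\pi(i)-i|\ge t)\ge \tfrac12 q^{2t-1}.$$
   Context: For $q>0$ and an integer $n\ge1$, the Mallows measure $\mu_{n,q}$ on the symmetric group $S_n$ is defined by $\mu_{n,q}(\pi)=q^{\mathrm{inv}(\pi)}/Z_{n,q}$, where $\mathrm{inv}(\pi)=|\{(i,j): i<j,\ \pi(i)>\pi(j)\}|$ is the number of inversions of $\pi$ and $Z_{n,q}$ is the normalizing constant. *)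

(* Defs.v *)
From HB Require Import structures.
From mathcomp Require Import all_boot all_order all_algebra all_fingroup.
Set Implicit Arguments. Unset Strict Implicit. Unset Printing Implicit Defensive.
Import Order.TTheory GRing.Theory Num.Theory.
Local Open Scope ring_scope.

(* Permutations of {0,...,n-1} (the paper's {1,...,n}, shifted by one;
   inversions and displacements |pi(i) - i| are shift-invariant). *)

Definition inv_num n (s : 'S_n) : nat :=
  #|[set p : 'I_n * 'I_n | (p.1 < p.2)%N && (s p.2 < s p.1)%N]|.

Definition mallowsZ (R : numFieldType) n (q : R) : R :=
  \sum_(s : 'S_n) q ^+ inv_num s.

Definition mallows (R : numFieldType) n (q : R) (s : 'S_n) : R :=
  q ^+ inv_num s / mallowsZ n q.

Definition disp n (s : 'S_n) (i : 'I_n) : nat :=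
  (maxn (s i) i - minn (s i) i)%N.

Definition prob_disp_ge (R : numFieldType) n (q : R) (i : 'I_n) (t : nat) : R :=
  \sum_(s : 'S_n | (t <= disp s i)%N) mallows q s.

Definition exp_disp (R : numFieldType) n (q : R) (i : 'I_n) : R :=
  \sum_(s : 'S_n) (disp s i)%:R * mallows q s.

(* Main.v *)
Require Import Defs.
From HB Require Import structures.
From mathcomp Require Import all_boot all_order all_algebra all_fingroup.
From mathcomp Require Import zify ring lra.
Set Implicit Arguments. Unset Strict Implicit. Unset Printing Implicit Defensive.
Import Order.TTheory GRing.Theory Num.Theory.

Lemma card_le_inj (T : finType) (Y : {set T}) (f : T -> nat) a :
  {in Y &, injective f} -> (forall y, y \in Y -> (f y < a)%N) -> (#|Y| <= a)%N.
Proof.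
move=> finj fa; rewrite cardE.
rewrite -(size_map f) -[a](size_iota 0).
apply: uniq_leq_size.
  rewrite map_inj_in_uniq ?enum_uniq //.
  by move=> x y; rewrite !mem_enum; apply: finj.
move=> x /mapP [y]; rewrite mem_enum => /fa ya ->.
by rewrite mem_iota.
Qed.

Lemma card_ge_ord n (Y : {set 'I_n}) k : (k <= n)%N ->
  (forall w : 'I_n, (w < k)%N -> w \in Y) -> (k <= #|Y|)%N.
Proof.
move=> kn HY.
have -> : k = #|[set widen_ord kn x | x in [set: 'I_k]]|.
  by rewrite card_imset ?cardsT ?card_ord //; by move=> x y /(congr1 val) /= /val_inj.
apply: subset_leq_card; apply/subsetP => x /imsetP [y _ ->].
by apply: HY => /=.
Qed.

Ltac ordneq := apply/eqP => /(congr1 (@nat_of_ord _)) /=; lia.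
Section Perm.
Variable n : nat.
Implicit Types (s : 'S_n) (i : 'I_n).

Definition Inv s := [set p : 'I_n * 'I_n | (p.1 < p.2)%N && (s p.2 < s p.1)%N].
Lemma invE s : inv_num s = #|Inv s|. Proof. by []. Qed.

Definition rcnt s i := #|[set m : 'I_n | (i < m)%N && (s m < s i)%N]|.

Lemma val_le_rcnt s i : (s i <= i + rcnt s i)%N.
Proof.
have h1 : (s i <= #|[set m : 'I_n | (s m < s i)%N]|)%N.
  have -> : [set m : 'I_n | (s m < s i)%N] = s @^-1: [set w : 'I_n | (w < s i)%N].
    by apply/setP => m; rewrite !inE.
  rewrite card_preimset; last exact: perm_inj.
  by apply: card_ge_ord => [|w wl]; rewrite ?inE // ltnW.
apply: (leq_trans h1).
apply: (leq_trans (n := #|[set m : 'I_n | (m < i)%N] :|: [set m : 'I_n | (i < m)%N && (s m < s i)%N]|)).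
  apply: subset_leq_card; apply/subsetP => m; rewrite !inE => H.
  case: (ltngtP m i) => // /val_inj meq.
  by move: H; rewrite meq ltnn.
apply: (leq_trans (leq_card_setU _ _)); rewrite leq_add2r.
apply: (card_le_inj (f := @nat_of_ord n)) => [x y _ _ /val_inj //|y]; by rewrite inE.
Qed.

Lemma tpv i (l x : 'I_n) : nat_of_ord (tperm i l x) =
  if nat_of_ord x == nat_of_ord i then nat_of_ord l else if nat_of_ord x == nat_of_ord l then nat_of_ord i else nat_of_ord x.
Proof.
case: tpermP => [->|->|/eqP xi /eqP xl]; rewrite ?eqxx //.
  by case: ifP => // /eqP /val_inj ->.
by rewrite !val_eqE (negPf xi) (negPf xl).
Qed.

Lemma swap_inv s i (l : 'I_n) : (i < l)%N -> (s l < s i)%N ->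
  (forall m : 'I_n, (i < m)%N -> (s m < s i)%N -> (s m <= s l)%N) ->
  (inv_num (tperm i l * s) < inv_num s)%N.
Proof.
move=> il sli smax.
pose t := tperm i l.
pose psi := fun p : 'I_n * 'I_n => if (p.1 < i)%N then (p.1, t p.2) else p.
have psi_inj : injective psi.
  move=> [a b] [c d]; rewrite /psi /=.
  case: ifP; case: ifP => // ci ai [ac bd].
  - by rewrite ac; congr pair; apply: (perm_inj bd).
  - by move: ci; rewrite -ac ai.
  - by move: ai; rewrite ac ci.
have ilI : (i, l) \in Inv s by rewrite inE /= il sli.
have sub : psi @: Inv (t * s) \subset Inv s :\ (i, l).
  apply/subsetP => _ /imsetP [[a b] H ->]; rewrite inE /= !permM in H.
  case/andP: H => ab H.
  have ta := tpv i l a; have tb := tpv i l b.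
  rewrite /psi /=; case: ifP => ai; rewrite !inE /= ?xpair_eqE.
    have ea : t a = a.
      by apply: val_inj; rewrite /= /t ta; do ?[case: ifP => ?]; lia.
    rewrite ea in H.
    apply/andP; split.
      by apply/negP => /andP [/eqP ai' _]; move: ai; rewrite ai' ltnn.
    apply/andP; split=> //.
    by rewrite /t -/t tb; do ?[case: ifP => ?]; lia.
  apply/andP; split.
    apply/negP => /andP [/eqP ea /eqP eb]; subst a b.
    by move: H; rewrite /t tpermL tpermR ltnNge ltnW.
  rewrite ab /=.
  have [eai|nai] := eqVneq a i.
    subst a; move: H; rewrite /t tpermL.
    have [ebl|nbl] := eqVneq b l.
      by subst b; rewrite tpermR ltnNge ltnW.
    rewrite tpermD 1?eq_sym //; last by ordneq.
    by move=> H; apply: (ltn_trans H).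
  have [eal|nal] := eqVneq a l.
    subst a; move: H; rewrite /t tpermR tpermD //; try by ordneq.
    move=> H; have := smax b; rewrite H => /(_ (ltn_trans il ab) isT) sbl.
    rewrite ltn_neqAle sbl andbT; apply/negP => /eqP /val_inj /perm_inj ebl.
    by move: ab; rewrite ebl ltnn.
  move: H; rewrite /t [tperm i l a]tpermD 1?[_ == a]eq_sym //.
  have [ebl|nbl] := eqVneq b l.
    subst b; rewrite tpermR => H; exact: ltn_trans sli H.
  have [ebi|nbi] := eqVneq b i.
    by subst b; move: ai; lia.
  by rewrite tpermD 1?eq_sym.
rewrite !invE [#|Inv s|](cardsD1 (i, l)) ilI add1n ltnS.
rewrite -(card_imset _ psi_inj).
exact: subset_leq_card.
Qed.

Lemma rcnt_swap s i (l : 'I_n) : (i < l)%N -> (s l < s i)%N ->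
  (forall m : 'I_n, (i < m)%N -> (s m < s i)%N -> (s m <= s l)%N) ->
  (rcnt s i <= (rcnt (tperm i l * s) i).+1)%N.
Proof.
move=> il sli smax.
rewrite /rcnt.
apply: (leq_trans (n := #|[set l] :|: [set m : 'I_n | (i < m)%N && ((tperm i l * s)%g m < (tperm i l * s)%g i)%N]|)).
  apply: subset_leq_card; apply/subsetP => m; rewrite !inE !permM tpermL.
  case/andP => im smi.
  have [->|nml] := eqVneq m l; first by [].
  rewrite im tpermD /=; first last.
    by rewrite eq_sym.
    by ordneq.
  have := smax m im smi; rewrite leq_eqVlt => /orP [/eqP /val_inj /perm_inj eml|//].
  by rewrite eml eqxx in nml.
by apply: (leq_trans (leq_card_setU _ _)); rewrite cards1.
Qed.

Definition Dmap i s : 'S_n :=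
  if [pick l : 'I_n | (i < l)%N && (s l < s i)%N &&
        [forall m : 'I_n, ((i < m)%N && (s m < s i)%N) ==> (s m <= s l)%N]]
  is Some l then tperm i l * s else s.

Lemma Dmap_spec s i : (0 < rcnt s i)%N -> exists l : 'I_n,
  [/\ (i < l)%N, (s l < s i)%N,
      (forall m : 'I_n, (i < m)%N -> (s m < s i)%N -> (s m <= s l)%N) &
      Dmap i s = (tperm i l * s)%g].
Proof.
move=> r0; rewrite /Dmap; case: pickP => [l /andP [/andP [il sl] /forallP fa]|none].
  exists l; split => // m im smi.
  by have := fa m; rewrite im smi.
exfalso; move: r0; rewrite card_gt0 => /set0Pn [m0]; rewrite inE => P0.
case: (@arg_maxnP _ m0 (fun m => (i < m)%N && (s m < s i)%N) (fun m => nat_of_ord (s m)) P0) => l Pl lmax.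
have := none l; rewrite Pl /=; move/negbT/negP; apply.
apply/forallP => m; apply/implyP => Pm; exact: lmax.
Qed.

Lemma Dmap_inj i : {in [set s | (0 < rcnt s i)%N] &, injective (Dmap i)}.
Proof.
move=> s1 s2; rewrite !inE => /Dmap_spec [l1 [il1 sl1 m1 ->]].
move=> /Dmap_spec [l2 [il2 sl2 m2 ->]] E.
have [el|nl] := eqVneq l1 l2.
  by subst l2; move: E; apply: mulgI.
have e1 := congr1 (fun f : 'S_n => f l1) E; rewrite /= !permM tpermR in e1.
rewrite tpermD in e1; try (by ordneq); try (by rewrite eq_sym); try done.
have e2 := congr1 (fun f : 'S_n => f l2) E; rewrite /= !permM tpermR in e2.
rewrite tpermD in e2; try (by ordneq); try (by rewrite eq_sym); try done.
have e3 := congr1 (fun f : 'S_n => f i) E; rewrite /= !permM !tpermL in e3.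
have h1 : (s1 i <= s2 i)%N.
  rewrite leqNgt; apply/negP => lt.
  have := m1 l2 il2; rewrite e2 => /(_ lt); rewrite e3; lia.
have h2 : (s2 i <= s1 i)%N.
  rewrite leqNgt; apply/negP => lt.
  have := m2 l1 il1; rewrite -e1 => /(_ lt); rewrite -e3; lia.
have : s2 l1 = s2 i by apply: val_inj => /=; rewrite -e1; lia.
by move/perm_inj => el1; move: il1; rewrite el1 ltnn.
Qed.

End Perm.

Section Sym.
Variable n : nat.
Definition w0 : 'S_n := perm (@rev_ord_inj n).
Definition rho (s : 'S_n) : 'S_n := (w0 * s * w0)%g.

Lemma rhoE s x : rho s x = rev_ord (s (rev_ord x)).
Proof. by rewrite /rho !permM !permE. Qed.

Lemma rho_invol s : rho (rho s) = s.
Proof. by apply/permP => x; rewrite !rhoE !rev_ordK. Qed.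

Lemma rho_inj : injective rho.
Proof. by move=> x y /(congr1 rho); rewrite !rho_invol. Qed.

Lemma inv_rho_le s : (inv_num s <= inv_num (rho s))%N.
Proof.
rewrite !invE.
pose f := fun p : 'I_n * 'I_n => (rev_ord p.2, rev_ord p.1).
have finj : injective f.
  move=> [a b] [c d]; rewrite /f /= => -[e1 e2].
  have := ltn_ord a; have := ltn_ord b; have := ltn_ord c; have := ltn_ord d.
  by move=> *; congr (_, _); apply: val_inj => /=; lia.
rewrite -(card_imset _ finj); apply: subset_leq_card.
apply/subsetP => _ /imsetP [[a b] H ->]; move: H; rewrite !inE /= !rhoE !rev_ordK.
case/andP => ab sba; apply/andP; split.
  have := ltn_ord a; have := ltn_ord b; lia.
rewrite /= ; have := ltn_ord (s a); have := ltn_ord (s b); lia.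
Qed.

Lemma inv_rho s : inv_num (rho s) = inv_num s.
Proof.
apply/eqP; rewrite eqn_leq inv_rho_le andbT.
by have := inv_rho_le (rho s); rewrite rho_invol.
Qed.

Lemma disp_rho s i : disp (rho s) (rev_ord i) = disp s i.
Proof.
rewrite /disp rhoE rev_ordK /=.
have := ltn_ord (s i); have := ltn_ord i; lia.
Qed.

Lemma rho_val s i : nat_of_ord (rho s (rev_ord i)) = (n - (s i).+1)%N.
Proof. by rewrite rhoE rev_ordK. Qed.
End Sym.

Section Cyc.
Variable n : nat.

Definition gfun (v a w : nat) : nat :=
  if w == v then v + a else if (v < w) && (w <= v + a) then w.-1 else w.

Lemma gfunE v a w : (w = v /\ gfun v a w = v + a) \/
  ([/\ w != v, v < w, w <= v + a & gfun v a w = w.-1]) \/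
  ([/\ w != v, (w < v) || (v + a < w) & gfun v a w = w]).
Proof.
rewrite /gfun; case: eqP => [->|/eqP nv]; first by left.
right; case: ifP => h; [left|right]; split => //; lia.
Qed.

Lemma gfun_inj v a : injective (gfun v a).
Proof.
move=> x y.
case: (gfunE v a x) => [[e1 ->]|[[h1 h2 h3 ->]|[h1 h2 ->]]];
case: (gfunE v a y) => [[e2 ->]|[[k1 k2 k3 ->]|[k1 k2 ->]]]; lia.
Qed.

Definition cf v a (w : 'I_n) : 'I_n :=
  if (v + a < n)%N then insubd w (gfun v a w) else w.

Lemma cf_val v a (w : 'I_n) : (v + a < n)%N -> nat_of_ord (cf v a w) = gfun v a w.
Proof.
move=> h; rewrite /cf h val_insubd.
case: (gfunE v a w) => [[e ->]|[[h1 h2 h3 ->]|[h1 h2 ->]]]; rewrite ?h //.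
  by have := ltn_ord w; case: ifP => //; lia.
by rewrite ltn_ord.
Qed.

Lemma cf_inj v a : injective (cf v a).
Proof.
move=> x y; case: (ltnP (v + a) n) => h.
  move=> e; apply: val_inj; apply: (@gfun_inj v a).
  by rewrite -!cf_val // e.
by rewrite /cf ltnNge h.
Qed.

Definition cyc v a : 'S_n := perm (@cf_inj v a).

Lemma inv_cyc (s : 'S_n) (i : 'I_n) a : (s i + a < n)%N ->
  (inv_num (s * cyc (s i) a)%g <= inv_num s + a)%N.
Proof.
move=> h.
pose Y := [set y : 'I_n | ((nat_of_ord (s i)) < s y)%N && (s y <= (nat_of_ord (s i)) + a)%N].
pose E := [set (i, y) | y in Y].
have hE : (#|E| <= a)%N.
  apply: (leq_trans (leq_imset_card _ _)).
  apply: (card_le_inj (f := fun y => (s y - (nat_of_ord (s i))).-1)).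
    move=> x y; rewrite !inE => /andP [x1 x2] /andP [y1 y2] e.
    apply: (@perm_inj _ s); apply: ord_inj; lia.
  by move=> y; rewrite inE; lia.
rewrite !invE.
apply: (leq_trans (n := #|Inv s :|: E|)).
  apply: subset_leq_card; apply/subsetP => -[x y]; rewrite !inE /= !permM !permE.
  rewrite !cf_val //.
  case/andP => xy H.
  have [exi|nxi] := eqVneq x i.
    subst x.
    have ny : (s y : nat) != (nat_of_ord (s i)).
      by apply/eqP => /val_inj /perm_inj eyi; move: xy; rewrite eyi ltnn.
    case: (gfunE (nat_of_ord (s i)) a (s i)) H => [[_ ->]|[[h1 _ _ _]|[h1 _ _]]]; last 2 first.
      by rewrite eqxx in h1.  by rewrite eqxx in h1.
    case: (gfunE (nat_of_ord (s i)) a (s y)) => [[e _]|[[k1 k2 k3 ->]|[k1 k2 ->]]].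
      by rewrite e eqxx in ny.
      move=> _; apply/orP; right; apply/imsetP; exists y; rewrite ?inE ?k2 ?k3 //.
    move=> hh; apply/orP; left; rewrite xy /=; lia.
  have nx : (s x : nat) != (nat_of_ord (s i)).
    by apply/eqP => /val_inj /perm_inj exi; rewrite exi eqxx in nxi.
  apply/orP; left; rewrite xy /=.
  have [eyi|nyi] := eqVneq y i.
    subst y; move: H.
    case: (gfunE (nat_of_ord (s i)) a (s i)) => [[_ ->]|[[h1 _ _ _]|[h1 _ _]]]; last 2 first.
      by rewrite eqxx in h1.  by rewrite eqxx in h1.
    case: (gfunE (nat_of_ord (s i)) a (s x)) => [[e _]|[[k1 k2 k3 ->]|[k1 k2 ->]]].
      by rewrite e eqxx in nx.
      lia.
    lia.
  have ny : (s y : nat) != (nat_of_ord (s i)).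
    by apply/eqP => /val_inj /perm_inj eyi; rewrite eyi eqxx in nyi.
  move: H.
  case: (gfunE (nat_of_ord (s i)) a (s x)) => [[e _]|[[k1 k2 k3 ->]|[k1 k2 ->]]];
  case: (gfunE (nat_of_ord (s i)) a (s y)) => [[e' _]|[[l1 l2 l3 ->]|[l1 l2 ->]]];
  rewrite ?e ?e' ?eqxx // in nx ny *; lia.
apply: (leq_trans (leq_card_setU _ _)); rewrite leq_add2l; exact: hE.
Qed.
End Cyc.

Section Sums.
Variable n : nat.
Variable R : realFieldType.
Variable q : R.
Local Open Scope ring_scope.
Hypothesis q0 : 0 <= q.
Hypothesis q1 : q <= 1.

Definition w (s : 'S_n) : R := q ^+ inv_num s.
Lemma w_ge0 s : 0 <= w s. Proof. exact: exprn_ge0. Qed.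

Lemma sum_sub (T : finType) (A B : pred T) (F : T -> R) :
  (forall x, A x -> B x) -> (forall x, 0 <= F x) ->
  \sum_(x | A x) F x <= \sum_(x | B x) F x.
Proof.
move=> AB F0; rewrite [X in X <= _]big_mkcond [X in _ <= X]big_mkcond.
apply: ler_sum => x _; case: ifP => Ax; first by rewrite AB.
by case: ifP.
Qed.

Lemma tail_step (i : 'I_n) t : \sum_(s | (t.+1 <= rcnt s i)%N) w s <=
  q * \sum_(s | (t <= rcnt s i)%N) w s.
Proof.
pose A := [set s : 'S_n | (t.+1 <= rcnt s i)%N].
have -> : \sum_(s | (t.+1 <= rcnt s i)%N) w s = \sum_(s in A) w s.
  by apply: eq_bigl => s; rewrite inE.
apply: (le_trans (y := \sum_(s in A) q * w (Dmap i s))).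
  apply: ler_sum => s; rewrite inE => hs.
  have [l [il sl m ->]] := Dmap_spec (leq_ltn_trans (leq0n t) hs).
  rewrite /w -exprS; apply: ler_wiXn2l => //.
  exact: swap_inv.
rewrite -mulr_sumr; apply: ler_wpM2l => //.
rewrite -big_imset /=; last first.
  move=> x y; rewrite !inE => hx hy; apply: Dmap_inj; rewrite inE.
    exact: (leq_ltn_trans (leq0n t) hx).
  exact: (leq_ltn_trans (leq0n t) hy).
apply: sum_sub; last exact: w_ge0.
move=> x /imsetP [s]; rewrite inE => hs ->.
have [l [il sl m ->]] := Dmap_spec (leq_ltn_trans (leq0n t) hs).
have := rcnt_swap il sl m; lia.
Qed.

Lemma tail_le (i : 'I_n) t : \sum_(s | (t <= rcnt s i)%N) w s <= q ^+ t * \sum_s w s.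
Proof.
elim: t => [|t IH].
  by rewrite expr0 mul1r; apply: sum_sub => // x; exact: w_ge0.
apply: (le_trans (tail_step i t)).
by rewrite exprS -mulrA; apply: ler_wpM2l.
Qed.

Lemma lb_sum (i : 'I_n) t : (0 < t)%N -> (i + 3 * t <= n + 1)%N ->
  q ^+ (2 * t).-1 * \sum_(s | (disp s i < t)%N) w s <=
  \sum_(s | (t <= disp s i)%N) w s.
Proof.
move=> t0 hi.
pose phi := fun s : 'S_n => (s * cyc n (s i) (2 * t).-1)%g.
pose Ac := [set s : 'S_n | (disp s i < t)%N].
have hv : forall s, s \in Ac -> (s i + (2 * t).-1 < n)%N.
  by move=> s; rewrite inE /disp; lia.
have phii : forall s, s \in Ac -> nat_of_ord (phi s i) = (s i + (2 * t).-1)%N.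
  by move=> s hs; rewrite /phi permM permE cf_val ?hv // /gfun eqxx.
rewrite (eq_bigl (mem Ac)); last by move=> s; rewrite /= inE.
rewrite mulr_sumr.
apply: (le_trans (y := \sum_(s in Ac) w (phi s))).
  apply: ler_sum => s hs; rewrite /w -exprD.
  apply: ler_wiXn2l => //; rewrite addnC; exact: inv_cyc (hv s hs).
rewrite -big_imset /=; last first.
  move=> s1 s2 h1 h2 E.
  have e := congr1 (fun f : 'S_n => nat_of_ord (f i)) E.
  rewrite /= !phii // in e.
  have sie : s1 i = s2 i by apply: ord_inj; lia.
  by move: E; rewrite /phi sie; apply: mulIg.
apply: sum_sub; last exact: w_ge0.
move=> x /imsetP [s hs ->]; rewrite /disp phii //.
by move: hs; rewrite inE /disp; lia.
Qed.

Lemma sum_rho (P : pred 'S_n) (F : 'S_n -> R) :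
  \sum_(s : 'S_n | P s) F s = \sum_(s : 'S_n | P (rho s)) F (rho s).
Proof. exact: (reindex_inj (@rho_inj n)). Qed.

Lemma w_rho s : w (rho s) = w s.
Proof. by rewrite /w inv_rho. Qed.

Lemma up_tail (i : 'I_n) t :
  \sum_(s : 'S_n | (i + t <= s i)%N) w s <= q ^+ t * \sum_s w s.
Proof.
apply: le_trans (tail_le i t).
apply: sum_sub; last exact: w_ge0.
by move=> s h; have := val_le_rcnt s i; lia.
Qed.

Lemma down_tail (i : 'I_n) t :
  \sum_(s : 'S_n | (s i + t <= i)%N) w s <= q ^+ t * \sum_s w s.
Proof.
rewrite sum_rho.
under eq_bigr do rewrite w_rho.
apply: le_trans (up_tail (rev_ord i) t).
apply: sum_sub; last exact: w_ge0.
move=> s; rewrite rhoE /=.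
have := ltn_ord (s (rev_ord i)); have := ltn_ord i; lia.
Qed.

Lemma tail_both (i : 'I_n) t : (0 < t)%N ->
  \sum_(s : 'S_n | (t <= disp s i)%N) w s <= 2 * q ^+ t * \sum_s w s.
Proof.
move=> t0.
apply: (le_trans (y := \sum_(s : 'S_n | (i + t <= s i)%N) w s +
                      \sum_(s : 'S_n | (s i + t <= i)%N) w s)); last first.
  have := up_tail i t; have := down_tail i t; lra.
rewrite !(big_mkcond (fun s => _ <= _)%N) -big_split /=.
apply: ler_sum => s _.
case: ifP => h; last by rewrite addr_ge0 //; case: ifP => _; rewrite ?w_ge0.
have [h1|h2] : (i + t <= s i)%N \/ (s i + t <= i)%N.
  by move: h; rewrite /disp; lia.
  rewrite h1 lerDl; case: ifP => _ //; exact: w_ge0.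
rewrite h2 lerDr; case: ifP => _ //; exact: w_ge0.
Qed.

Lemma sum_disp_rev (P : pred nat) (i : 'I_n) :
  \sum_(s : 'S_n | P (disp s (rev_ord i))) w s = \sum_(s : 'S_n | P (disp s i)) w s.
Proof.
rewrite sum_rho; under eq_bigr do rewrite w_rho.
by apply: eq_bigl => s; rewrite disp_rho.
Qed.

Lemma lb_all (i : 'I_n) t : (0 < t)%N -> (6 * t <= n + 4)%N ->
  q ^+ (2 * t).-1 * \sum_(s : 'S_n | (disp s i < t)%N) w s <=
  \sum_(s : 'S_n | (t <= disp s i)%N) w s.
Proof.
move=> t0 ht.
have [h|h] := leqP (i + 3 * t) (n + 1); first exact: lb_sum.
rewrite -(sum_disp_rev (fun d => (d < t)%N)) -(sum_disp_rev (fun d => (t <= d)%N)).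
apply: lb_sum => //=; have := ltn_ord i; lia.
Qed.

Lemma disp_lt s (i : 'I_n) : (disp s i < n)%N.
Proof. rewrite /disp; have := ltn_ord (s i); have := ltn_ord i; lia. Qed.

Lemma sum_bool_min d K : (\sum_(k < K) ((k < d)%N : nat) = minn d K)%N.
Proof.
elim: K => [|K IH]; first by rewrite big_ord0 minn0.
rewrite big_ord_recr /= IH; case: (ltnP K d) => h /=; lia.
Qed.

Lemma exp_min (i : 'I_n) K :
  \sum_s (minn (disp s i) K)%:R * w s =
  \sum_(k < K) \sum_(s : 'S_n | (k < disp s i)%N) w s.
Proof.
under eq_bigr do rewrite -sum_bool_min natr_sum mulr_suml.
rewrite exchange_big /=; apply: eq_bigr => k _.
rewrite [RHS]big_mkcond /=; apply: eq_bigr => s _.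
by case: ifP => _; rewrite ?mul1r ?mul0r.
Qed.

Lemma exp_sum_ge (i : 'I_n) K :
  \sum_(k < K) \sum_(s : 'S_n | (k < disp s i)%N) w s <= \sum_s (disp s i)%:R * w s.
Proof.
rewrite -exp_min; apply: ler_sum => s _; apply: ler_wpM2r; first exact: w_ge0.
by rewrite ler_nat geq_minl.
Qed.

Lemma exp_sum_eq (i : 'I_n) :
  \sum_s (disp s i)%:R * w s = \sum_(k < n) \sum_(s : 'S_n | (k < disp s i)%N) w s.
Proof.
rewrite -exp_min; apply: eq_bigr => s _.
by rewrite (minn_idPl (ltnW (disp_lt s i))).
Qed.

End Sums.

Section Real.
Variable R : realFieldType.
Variable q : R.
Local Open Scope ring_scope.
Hypothesis q0 : 0 < q.
Hypothesis q1 : q < 1.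

Lemma geom_sum K : (1 - q) * \sum_(k < K) q ^+ k.+1 = q - q ^+ K.+1.
Proof.
elim: K => [|K IH]; first by rewrite big_ord0 mulr0 expr1 subrr.
rewrite big_ord_recr /= mulrDr IH [q ^+ K.+2]exprS; ring.
Qed.

Lemma geom_le K : \sum_(k < K) q ^+ k.+1 <= q / (1 - q).
Proof.
rewrite ler_pdivlMr ?subr_gt0 // mulrC geom_sum.
have := exprn_ge0 K.+1 (ltW q0); lra.
Qed.

Lemma sum_recr (F : nat -> R) m :
  \sum_(0 <= i < m.+1) F i = \sum_(0 <= i < m) F i + F m.
Proof. exact: big_nat_recr. Qed.

Lemma pair_sum T : \sum_(0 <= s < 2 * T) q ^+ s.+1 <=
  2 * \sum_(0 <= k < T) q ^+ (2 * k.+1).-1.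
Proof.
elim: T => [|T IH]; first by rewrite muln0 !big_geq // mulr0.
have -> : (2 * T.+1 = (2 * T).+2)%N by lia.
rewrite !sum_recr.
have -> : ((2 * T.+1).-1 = (2 * T).+1)%N by lia.
have := ler_wiXn2l (ltW q0) (ltW q1) (leqnSn (2 * T).+1).
lra.
Qed.

Lemma final_real T n : (1 <= T)%N -> (n.-1 <= 6 * T)%N ->
  24^-1 * Num.min (q / (1 - q)) (n.-1)%:R <= 2^-1 * \sum_(0 <= k < T) q ^+ (2 * k.+1).-1.
Proof.
move=> T1 hn.
have hp := pair_sum T; rewrite big_mkord in hp.
set H := \sum_(s < 2 * T) q ^+ s.+1 in hp.
suff : 6^-1 * Num.min (q / (1 - q)) (n.-1)%:R <= H by lra.
have [hx|hx] := lerP (q ^+ (2 * T)) (2^-1).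
  have hg := geom_sum (2 * T); rewrite -/H exprS in hg.
  have : q / (1 - q) <= 2 * H.
    have h2 : 0 <= q * (2^-1 - q ^+ (2 * T)).
      by apply: mulr_ge0; [exact: ltW|rewrite subr_ge0].
    rewrite ler_pdivrMr ?subr_gt0 //; lra.
  have := ge_min (q / (1 - q)) (q / (1 - q)) (n.-1)%:R; rewrite lexx /=.
  have : 0 <= H by apply: sumr_ge0 => k _; apply: exprn_ge0; apply: ltW.
  lra.
have hH : (2 * T)%:R * q ^+ (2 * T) <= H.
  rewrite mulr_natl.
  have -> : q ^+ (2 * T) *+ (2 * T) = \sum_(k < 2 * T) q ^+ (2 * T).
    by rewrite sumr_const card_ord.
  apply: ler_sum => k _; apply: ler_wiXn2l; [exact: ltW|exact: ltW|exact: ltn_ord].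
have hT : (n.-1)%:R <= 6 * T%:R :> R.
  by rewrite -natrM ler_nat.
have := ge_min ((n.-1)%:R) (q / (1 - q)) (n.-1)%:R; rewrite lexx orbT.
rewrite natrM in hH.
have : 0 <= T%:R :> R by [].
nra.
Qed.
End Real.

Section Main.
Variable R : realFieldType.
Variable q : R.
Variable n : nat.
Variable i : 'I_n.
Local Open Scope ring_scope.
Hypothesis q0 : 0 < q.
Hypothesis q1 : q < 1.

Let Z := \sum_(s : 'S_n) w q s.

Lemma Z_gt0 : 0 < Z.
Proof.
rewrite /Z (bigD1 1%g) //=.
have := exprn_gt0 (inv_num (1%g : 'S_n)) q0.
have : 0 <= \sum_(s : 'S_n | s != 1%g) w q s by apply: sumr_ge0 => s _; apply: w_ge0; apply: ltW.
rewrite /w; lra.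
Qed.

Lemma probE t : prob_disp_ge q i t = (\sum_(s : 'S_n | (t <= disp s i)%N) w q s) / Z.
Proof. by rewrite /prob_disp_ge mulr_suml. Qed.

Lemma expE : exp_disp q i = (\sum_(s : 'S_n) (disp s i)%:R * w q s) / Z.
Proof. by rewrite /exp_disp mulr_suml; apply: eq_bigr => s _; rewrite /mallows mulrA. Qed.

Lemma part1 t : (1 <= t)%N -> prob_disp_ge q i t <= 2 * q ^+ t.
Proof.
move=> t1; rewrite probE ler_pdivrMr ?Z_gt0 //.
apply: le_trans (tail_both (ltW q0) (ltW q1) i t1) _; exact: lexx.
Qed.

Lemma lbprob t : (0 < t)%N -> (6 * t <= n + 4)%N ->
  2^-1 * q ^+ (2 * t).-1 <= prob_disp_ge q i t.
Proof.
move=> t0 ht; rewrite probE ler_pdivlMr ?Z_gt0 //.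
have hl := lb_all (ltW q0) (ltW q1) i t0 ht.
have hZ : Z = \sum_(s : 'S_n | (t <= disp s i)%N) w q s + \sum_(s : 'S_n | (disp s i < t)%N) w q s.
  rewrite /Z (bigID (fun s : 'S_n => (t <= disp s i)%N)) /=; congr (_ + _).
  by apply: eq_bigl => s; rewrite ltnNge.
rewrite hZ.
have hx1 : q ^+ (2 * t).-1 <= 1 by apply: exprn_ile1; apply: ltW.
have hx0 : 0 <= q ^+ (2 * t).-1 by apply: exprn_ge0; apply: ltW.
have hA : 0 <= \sum_(s : 'S_n | (t <= disp s i)%N) w q s.
  by apply: sumr_ge0 => s _; apply: w_ge0; apply: ltW.
have hB : 0 <= \sum_(s : 'S_n | (disp s i < t)%N) w q s.
  by apply: sumr_ge0 => s _; apply: w_ge0; apply: ltW.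
nra.
Qed.

Lemma exp_ge0 : 0 <= exp_disp q i.
Proof.
rewrite expE; apply: divr_ge0; last exact: ltW Z_gt0.
by apply: sumr_ge0 => s _; apply: mulr_ge0 => //; apply: w_ge0; apply: ltW.
Qed.

Lemma part_up1 : exp_disp q i <= 2 * q / (1 - q).
Proof.
rewrite expE (exp_sum_eq (ltW q0) (ltW q1)) ler_pdivrMr ?Z_gt0 //.
apply: (le_trans (y := \sum_(k < n) 2 * q ^+ k.+1 * Z)).
  apply: ler_sum => k _; apply: le_trans (tail_both (ltW q0) (ltW q1) i (ltn0Sn k)) _; exact: lexx.
rewrite -mulr_suml -mulr_sumr -!mulrA; apply: ler_wpM2l => //.
rewrite mulrA; apply: ler_wpM2r; first exact: ltW Z_gt0.
exact: (geom_le q0 q1 n).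
Qed.

Lemma part_up2 : exp_disp q i <= (n.-1)%:R.
Proof.
rewrite expE ler_pdivrMr ?Z_gt0 // /Z mulr_sumr.
apply: ler_sum => s _; apply: ler_wpM2r; first by apply: w_ge0; apply: ltW.
rewrite ler_nat; have := disp_lt (ltW q0) (ltW q1) s i; lia.
Qed.

Lemma part_low : 24^-1 * Num.min (q / (1 - q)) (n.-1)%:R <= exp_disp q i.
Proof.
have [hn|hn] := leqP n 1.
  have : Num.min (q / (1 - q)) (n.-1)%:R <= 0.
    by rewrite ge_min; apply/orP; right; have -> : n.-1 = 0%N by lia.
  have := exp_ge0; lra.
pose T := ((n + 4) %/ 6)%N.
apply: (le_trans (final_real q0 q1 (T := T) (n := n) _ _)); first 1 [idtac] ; try (rewrite /T; lia).
apply: (le_trans (y := \sum_(k < T) prob_disp_ge q i k.+1)).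
  rewrite big_mkord mulr_sumr; apply: ler_sum => k _.
  apply: lbprob => //; have := ltn_ord k; rewrite /T; lia.
rewrite expE ler_pdivlMr ?Z_gt0 //.
apply: le_trans (exp_sum_ge (ltW q0) (ltW q1) i T).
rewrite mulr_suml; apply: ler_sum => k _; rewrite probE divfK //.
exact: lt0r_neq0 Z_gt0.
Qed.

End Main.

Local Open Scope ring_scope.

Theorem theorem1p1 :
  exists c : rat, 0 < c /\
  forall (R : realFieldType) (q : R) (n : nat) (i : 'I_n),
    0 < q -> q < 1 ->
    [/\ (forall t : nat, (1 <= t)%N -> prob_disp_ge q i t <= 2 * q ^+ t),
        ratr c * Num.min (q / (1 - q)) (n.-1)%:R <= exp_disp q i,
        exp_disp q i <= Num.min (2 * q / (1 - q)) (n.-1)%:R &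
        (3 <= n)%N ->
        forall t : nat, (1 <= t)%N -> (8 * t <= n + 5)%N ->
          (2^-1) * q ^+ (2 * t).-1 <= prob_disp_ge q i t].
Proof.
exists (24%:R^-1); split; first by rewrite invr_gt0.
move=> R q n i q0 q1; split.
- exact: part1.
- have -> : ratr (24%:R^-1 : rat) = 24^-1 :> R by rewrite fmorphV rmorph_nat.
  exact: part_low.
- by rewrite le_min; apply/andP; split; [apply: part_up1|apply: part_up2].
- move=> n3 t t1 ht; apply: lbprob => //; lia.
Qed.
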